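(* Let $\mathcal A$ be an indecomposable bounded linear operator on a semiunitary space $U$, and suppose $0\ne U_0\ne U$, where $U_0=\{u\in U:\langle u,u\rangle=0\}$. Let $\mathcal A_0:U_0\to U_0$ be the restriction of $\mathcal A$ to $U_0$ and $\mathcal A_1:U/U_0\to U/U_0$ the induced operator $u+U_0\mapsto \mathcal Au+U_0$. If $\lambda$ is an eigenvalue of $\mathcal A_0$, then (a) $\lambda$ is an eigenvalue of $\mathcal A_1$; (b) the algebraic multiplicity of $\lambda$ in $\mathcal A_1$ is greater than or equal to the geometric multiplicity of $\lambda$ in $\mathcal A_0$; (c) for each $k\ge1$, the geometric multiplicity of $\lambda$ in $\mathcal A_1$ is greater than or equal to the number of Jordan blocks $J_k(\lambda)$ of size $k\times k$ in the Jordan canonical form of $\mathcal A_0$.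
   Context: A semiunitary space is a finite-dimensional complex vector space $U$ with a positive semidefinite Hermitian form $\langle\cdot,\cdot\rangle$; $\|u\|=\sqrt{\langle u,u\rangle}$. A linear operator $\mathcal A:U\to U$ is bounded if there is a positive real $c$ with $\|\mathcal Au\|\le c\|u\|$ for all $u\in U$ (equivalently, $U_0$ is $\mathcal A$-invariant). An operator $\mathcal A$ on $U$ is indecomposable if $U$ cannot be written as $U=V\oplus W$ with $V,W$ nonzero $\mathcal A$-invariant subspaces such that $\langle v,w\rangle=0$ for all $v\in V$, $w\in W$. The geometric multiplicity of an eigenvalue is the number of Jordan blocks with that eigenvalue in the Jordan canonical form; the algebraic multiplicity is its multiplicity as a root of the characteristic polynomial. *)

(* Defs.v *)
From HB Require Import structures.
From mathcomp Require Import all_boot all_order all_algebra.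
Set Implicit Arguments. Unset Strict Implicit. Unset Printing Implicit Defensive.
Import Order.TTheory GRing.Theory Num.Theory.
Local Open Scope ring_scope.

(* Conventions: the semiunitary space U is C^n (n = r + s) with vectors written
   as ROW vectors 'rV[C]_n; a linear operator is a square matrix A acting by
   u |-> u *m A. *)

Section Defs.
Variable C : numClosedFieldType.

Definition hform n (G : 'M[C]_n) (u v : 'rV[C]_n) : C :=
  (u *m G *m (map_mx Num.conj v)^T) 0 0.

Definition hermitian_mx n (G : 'M[C]_n) : Prop := G = (map_mx Num.conj G)^T.

Definition psd_form n (G : 'M[C]_n) : Prop := forall u : 'rV[C]_n, 0 <= hform G u u.

Definition semi_norm n (G : 'M[C]_n) (u : 'rV[C]_n) : C := sqrtC (hform G u u).

Definition bounded_op n (G A : 'M[C]_n) : Prop :=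
  exists c : C, c \is Num.real /\ 0 < c /\
    forall u : 'rV[C]_n, semi_norm G (u *m A) <= c * semi_norm G u.

(* A is indecomposable: U is not an orthogonal direct sum of two nonzero
   A-invariant subspaces (subspaces = row spaces of square matrices). *)
Definition indecomposable_op n (G A : 'M[C]_n) : Prop :=
  ~ exists V W : 'M[C]_n,
      [/\ V != 0, W != 0, (V + W == 1%:M)%MS && mxdirect (V + W),
          stablemx V A && stablemx W A &
          forall v w : 'rV[C]_n, (v <= V)%MS -> (w <= W)%MS -> hform G v w = 0].

(* Given an invertible change-of-basis matrix P whose first r rows form a basis
   of U_0 and last s rows complete it to a basis of U, the matrix of A in the
   basis given by the rows of P is  P A P^-1 ; its upper-left r x r block is
   the matrix of the restriction A_0 : U_0 -> U_0 and its lower-right s x s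
   block is the matrix of the induced operator A_1 : U/U_0 -> U/U_0 (in the
   basis of the images of the last s rows of P). *)
Definition restr_op r s (P A : 'M[C]_(r + s)) : 'M[C]_r :=
  ulsubmx (P *m A *m invmx P).
Definition quot_op r s (P A : 'M[C]_(r + s)) : 'M[C]_s :=
  drsubmx (P *m A *m invmx P).

Definition jordan_block (a : C) (k : nat) : 'M[C]_k :=
  \matrix_(i < k, j < k) (a *+ (i == j :> nat) + ((j : nat) == i.+1)%:R).

Definition is_jordan_form n (A : 'M[C]_n) (m : nat) (sz : 'I_m -> nat)
    (ev : 'I_m -> C) : Prop :=
  (forall i, 0 < sz i)%N /\
  exists (e : (\sum_(i < m) sz i)%N = n) (Q : 'M[C]_n),
    Q \in unitmx /\
    A = invmx Q *m castmx (e, e) (\mxdiag_(i < m) jordan_block (ev i) (sz i)) *m Q.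

(* number of Jordan blocks with eigenvalue a (= geometric multiplicity) *)
Definition n_blocks m (ev : 'I_m -> C) (a : C) : nat :=
  #|[pred i : 'I_m | ev i == a]|.

Definition n_blocks_of_size m (sz : 'I_m -> nat) (ev : 'I_m -> C) (a : C)
    (k : nat) : nat :=
  #|[pred i : 'I_m | (ev i == a) && (sz i == k)]|.

Definition alg_mult n (A : 'M[C]_n) (a : C) : nat := mup a (char_poly A).

End Defs.

(* Main.v *)
Require Import Defs.
From HB Require Import structures.
From mathcomp Require Import all_boot all_order all_algebra.
Import Order.TTheory GRing.Theory Num.Theory.
Local Open Scope ring_scope.
Set Warnings "-notation-overridden -ambiguous-paths".
From mathcomp Require Import zify ring.

Set Implicit Arguments. Unset Strict Implicit. Unset Printing Implicit Defensive.

Section GenF.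
Variable F : fieldType.

Lemma mul_mxdiag p (p_ : 'I_p -> nat) (D E : forall i, 'M[F]_(p_ i)) :
  \mxdiag_i D i *m \mxdiag_i E i = \mxdiag_i (D i *m E i).
Proof.
rewrite [X in _ *m X]/mxdiag mul_mxdiag_mxblock /mxdiag; apply/eq_mxblock => i j.
by case: eqVneq => [->|]; rewrite ?conform_mx_id ?mulmx0.
Qed.

Lemma mxdiagX p (p_ : 'I_p -> nat) (D : forall i, 'M[F]_(p_ i)) j :
  (\mxdiag_i D i) ^+ j = \mxdiag_i (D i ^+ j).
Proof.
elim: j => [|j IH].
  rewrite expr0; under eq_mxdiag do rewrite expr0.
  by rewrite (mxdiagZ (p_ := p_) 1).
by rewrite exprSr -mulmxE IH mul_mxdiag; apply: eq_mxdiag => i; rewrite exprSr mulmxE.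
Qed.

Lemma conjX n (Q Z : 'M[F]_n) j : Q \in unitmx ->
  (invmx Q *m Z *m Q) ^+ j = invmx Q *m Z ^+ j *m Q.
Proof.
move=> Qu; elim: j => [|j IH]; first by rewrite !expr0 mulmx1 mulVmx.
rewrite exprSr -mulmxE IH exprSr -mulmxE !mulmxA.
by rewrite -[_ *m Q *m invmx Q]mulmxA mulmxV // mulmx1.
Qed.

Lemma conjX' n (Q Z : 'M[F]_n) j : Q \in unitmx ->
  (Q *m Z *m invmx Q) ^+ j = Q *m Z ^+ j *m invmx Q.
Proof.
move=> Qu; have Qu' : invmx Q \in unitmx by rewrite unitmx_inv.
by have := conjX Z j Qu'; rewrite invmxK.
Qed.

Lemma rank_conj n (Q Z : 'M[F]_n) : Q \in unitmx ->
  \rank (invmx Q *m Z *m Q) = \rank Z.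
Proof.
move=> Qu; rewrite mxrankMfree ?row_free_unit //.
by rewrite (eqmxMfull _ _) // /row_full mxrank_unit // unitmx_inv.
Qed.

Lemma conjB n (Q Z : 'M[F]_n) (b : F) : Q \in unitmx ->
  invmx Q *m Z *m Q - b%:M = invmx Q *m (Z - b%:M) *m Q.
Proof.
move=> Qu; rewrite mulmxBr mulmxBl mul_mx_scalar -scalemxAl mulVmx //.
by rewrite scalemx1.
Qed.

Lemma rank_castX n n' (e : n = n') (Y : 'M[F]_n) b j :
  \rank ((castmx (e, e) Y - b%:M) ^+ j) = \rank ((Y - b%:M) ^+ j).
Proof. by case: n' / e; rewrite castmx_id. Qed.

Lemma jordan_blockB (C : numClosedFieldType) (a b : C) k :
  jordan_block a k - b%:M = jordan_block (a - b) k.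
Proof.
apply/matrixP => i j; rewrite !mxE -val_eqE /=.
by case: eqP => _; rewrite ?mulr1n ?mulr0n ?subr0; [rewrite addrAC | ].
Qed.

Lemma sum_ord_ind k m (G : nat -> F) :
  \sum_(t < k) ((t == m :> nat)%:R * G t) = if (m < k)%N then G m else 0.
Proof.
case: ltnP => h.
  rewrite (bigD1 (Ordinal h)) //= eqxx mul1r big1 ?addr0 // => t.
  by rewrite -val_eqE /= => /negbTE ->; rewrite mul0r.
rewrite big1 // => t _; rewrite ltn_eqF ?mul0r //.
exact: leq_trans (ltn_ord t) h.
Qed.

End GenF.


Section Jordan.
Variable C : numClosedFieldType.

Definition shiftmx k j : 'M[C]_k := \matrix_(i < k, l < k) ((l == (i + j)%N :> nat)%:R).

Lemma jordan0X k j : (jordan_block (0 : C) k) ^+ j = shiftmx k j.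
Proof.
elim: j => [|j IH].
  by apply/matrixP => i l; rewrite expr0 !mxE addn0 eq_sym -val_eqE.
rewrite exprSr -mulmxE IH; apply/matrixP => i l; rewrite !mxE.
under eq_bigr do rewrite !mxE mul0rn add0r.
move: (sum_ord_ind k (i + j)%N (fun t => (l == t.+1 :> nat)%:R : C)) => /= ->; rewrite addnS.
case: ltnP => // h; rewrite ltn_eqF //; exact: leq_trans (ltn_ord l) (leqW h).
Qed.

Lemma rank_shiftmx k j : \rank (shiftmx k j) = (k - j)%N.
Proof.
have hk : (k - j <= k)%N by rewrite leq_subr.
apply/eqP; rewrite eqn_leq; apply/andP; split.
  have -> : shiftmx k j = pid_mx (k - j) *m shiftmx k j.
    apply/matrixP => i l; rewrite !mxE.
    under eq_bigr do rewrite !mxE.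
    case: (ltnP i (k - j)) => hi.
      under eq_bigr do rewrite andbT eq_sym.
      by move: (sum_ord_ind k i (fun t => (l == (t + j)%N :> nat)%:R : C)) => /= ->; rewrite ltn_ord.
    rewrite big1 => [|t _]; last by rewrite andbF mul0r.
    rewrite eqn_leq andbC leqNgt.
    suff -> : (l < i + j)%N by [].
    by have := ltn_ord l; lia.
  by apply: (leq_trans (mxrankM_maxl _ _)); rewrite rank_pid_mx.
have <- : \rank (pid_mx (k - j) : 'M[C]_k) = (k - j)%N by rewrite rank_pid_mx.
have -> : pid_mx (k - j) = shiftmx k j *m (shiftmx k j)^T.
  apply/matrixP => i i'; rewrite !mxE.
  under eq_bigr do rewrite !mxE.
  move: (sum_ord_ind k (i + j)%N (fun t => (t == (i' + j)%N :> nat)%:R : C)) => /= ->; rewrite eqn_add2r.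
  rewrite ltn_subRL addnC; case: (ltnP (i + j) k) => h; first by rewrite andbT.
  by rewrite andbF.
by apply: mxrankM_maxl.
Qed.

Lemma jordan_unit (a : C) k : a != 0 -> jordan_block a k \in unitmx.
Proof.
move=> a0; rewrite unitmxE -det_tr det_trig.
  under eq_bigr do rewrite !mxE eqxx mulr1n ltn_eqF // addr0.
  by rewrite prodr_const unitfE expf_neq0.
apply/is_trig_mxP => i j lij; rewrite !mxE gtn_eqF // ltn_eqF ?mulr0n ?add0r //.
exact: ltnW.
Qed.

Lemma rank_jordanX (a : C) k j :
  \rank ((jordan_block a k) ^+ j) = if a == 0 then (k - j)%N else k.
Proof.
case: eqP => [->|/eqP a0]; first by rewrite jordan0X rank_shiftmx.
elim: j => [|j IH]; first by rewrite expr0 mxrank1.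
by rewrite exprSr -mulmxE mxrankMfree // row_free_unit jordan_unit.
Qed.

Lemma jordan_form_rank n (X : 'M[C]_n) m (sz : 'I_m -> nat) ev (b : C) j :
  is_jordan_form X sz ev ->
  \rank ((X - b%:M) ^+ j)%R = (\sum_(i < m) (if ev i == b then sz i - j else sz i))%N.
Proof.
case=> hsz [e [Q [Qu ->]]].
rewrite conjB // conjX // rank_conj // rank_castX.
rewrite -(mxdiagZ (p_ := sz) b) -mxdiagB.
under eq_mxdiag do rewrite jordan_blockB.
rewrite mxdiagX rank_mxdiag; apply: eq_bigr => i _.
by rewrite rank_jordanX subr_eq0.
Qed.

Lemma jordan_form_size n (X : 'M[C]_n) m (sz : 'I_m -> nat) ev :
  is_jordan_form X sz ev -> (\sum_(i < m) sz i)%N = n.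
Proof. by case=> _ [e _]. Qed.

Lemma jordan_form_pos n (X : 'M[C]_n) m (sz : 'I_m -> nat) ev :
  is_jordan_form X sz ev -> forall i, (0 < sz i)%N.
Proof. by case. Qed.

Lemma jordan_nblocks n (X : 'M[C]_n) m (sz : 'I_m -> nat) ev (b : C) :
  is_jordan_form X sz ev ->
  (\rank (X - b%:M)%R + n_blocks ev b)%N = n.
Proof.
move=> hJ; rewrite -[in RHS](jordan_form_size hJ) -(expr1 (X - b%:M)) (jordan_form_rank _ _ hJ).
rewrite /n_blocks -sum1_card [X in (_ + X)%N]big_mkcond /= -big_split /=.
apply: eq_bigr => i _; rewrite inE; case: eqP => _ //=; last by rewrite addn0.
by rewrite subnK // (jordan_form_pos hJ).
Qed.

Lemma jordan_nblocks_size n (X : 'M[C]_n) m (sz : 'I_m -> nat) ev (b : C) k :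
  is_jordan_form X sz ev ->
  (\rank ((X - b%:M) ^+ k)%R + \rank ((X - b%:M) ^+ k.+2)%R
   = \rank ((X - b%:M) ^+ k.+1)%R + \rank ((X - b%:M) ^+ k.+1)%R + n_blocks_of_size sz ev b k.+1)%N.
Proof.
move=> hJ; rewrite !(jordan_form_rank _ _ hJ).
rewrite /n_blocks_of_size -sum1_card [X in (_ = _ + X)%N]big_mkcond /= -!big_split /=.
apply: eq_bigr => i _; rewrite inE; case: eqP => _ //=; last by rewrite addn0.
by case: (ltngtP (sz i) k.+1) => h; lia.
Qed.

End Jordan.


Section Ranks.
Variable F : fieldType.

Lemma rank_mul_ge m n p (A : 'M[F]_(m, n)) (X : 'M_(n, p)) :
  (\rank A + \rank X <= \rank (A *m X) + n)%N.
Proof.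
have e := mxrank_mul_ker A X.
have h1 : (\rank (A :&: kermx X)%MS <= n - \rank X)%N.
  by rewrite -mxrank_ker mxrankS // capmxSr.
have h2 := rank_leq_row X. lia.
Qed.

Lemma rank_lblock m1 m2 n1 n2 (A : 'M[F]_(m1, n1)) (B' : 'M_(m2, n1)) (D : 'M_(m2, n2)) :
  (\rank A + \rank D <= \rank (block_mx A 0 B' D))%N.
Proof.
set X := block_mx A 0 B' D.
pose Pi := col_mx (0 : 'M[F]_(n1, n2)) (1%:M : 'M_n2).
have e := mxrank_mul_ker X Pi.
have hXP : X *m Pi = col_mx 0 D.
  by rewrite mul_block_col !mulmx0 !mulmx1 ?add0r ?addr0.
rewrite hXP rank_col_0mx in e.
suff : (\rank A <= \rank (X :&: kermx Pi)%MS)%N by lia.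
rewrite -(rank_row_mx0 n2 A); apply: mxrankS; rewrite sub_capmx; apply/andP; split.
  by rewrite /X block_mxEv -addsmxE addsmxSl.
by apply/sub_kermxP; rewrite mul_row_col mulmx0 mul0mx addr0.
Qed.

Lemma rank_col_le m1 m2 n (A : 'M[F]_(m1, n)) (D : 'M_(m2, n)) :
  (\rank (col_mx A D) <= \rank A + \rank D)%N.
Proof. by rewrite -addsmxE; apply: mxrank_adds_leqif. Qed.

Variables (r s : nat) (N0 : 'M[F]_r) (B : 'M[F]_(s, r)) (N1 : 'M[F]_s).
Let N := block_mx N0 0 B N1.

Lemma blockX j : exists Bj, N ^+ j = block_mx (N0 ^+ j) 0 Bj (N1 ^+ j).
Proof.
elim: j => [|j [Bj IH]]; first by exists 0; rewrite !expr0 -scalar_mx_block.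
exists (Bj *m N0 + N1 ^+ j *m B).
rewrite exprSr -mulmxE IH /N mulmx_block !mulmx0 !mul0mx !addr0 add0r.
by rewrite !exprSr !mulmxE.
Qed.

Lemma rowE_X m (x : 'M_(m, r)) j :
  row_mx x (0 : 'M_(m, s)) *m N ^+ j = row_mx (x *m N0 ^+ j) 0.
Proof.
have [Bj ->] := blockX j.
by rewrite mul_row_block !mul0mx !mulmx0 !addr0.
Qed.

Lemma rank_ker_step m (X : 'M[F]_m) k :
  (\rank (X ^+ k.+1) + \rank (X ^+ k :&: kermx X) = \rank (X ^+ k))%N.
Proof. by rewrite exprSr -mulmxE mxrank_mul_ker. Qed.

Lemma I1 (H : forall (x : 'rV_r) k, row_mx x 0 *m N ^+ k.+1 = 0 ->
                 (row_mx x 0 *m N ^+ k <= N ^+ k.+1)%MS) k :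
  (\rank (N0 ^+ k) + \rank (N ^+ k.+2) <= \rank (N0 ^+ k.+1) + \rank (N ^+ k.+1))%N.
Proof.
have e0 := rank_ker_step N0 k; have e1 := rank_ker_step N k.+1.
suff : (\rank (N0 ^+ k :&: kermx N0) <= \rank (N ^+ k.+1 :&: kermx N))%N by lia.
rewrite -(rank_row_mx0 s (N0 ^+ k :&: kermx N0)%MS); apply: mxrankS.
apply/row_subP => i; rewrite row_row_mx row0.
set x := row i _.
have : (x <= N0 ^+ k :&: kermx N0)%MS by apply: row_sub.
rewrite sub_capmx => /andP[/submxP[z ->] /sub_kermxP xN0].
have hz : row_mx z 0 *m N ^+ k.+1 = 0.
  by rewrite rowE_X exprSr -mulmxE mulmxA xN0 row_mx0.
have := H z k hz; rewrite rowE_X => hsub.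
rewrite sub_capmx hsub /=; apply/sub_kermxP.
by rewrite -(expr1 N) rowE_X expr1 xN0 row_mx0.
Qed.

Lemma I2 k :
  (\rank (N ^+ k) + \rank (N0 ^+ k.+1) + \rank N1
     <= \rank (N0 ^+ k) + \rank (N ^+ k.+1) + s)%N.
Proof.
pose E := row_mx (1%:M : 'M[F]_r) (0 : 'M_(r, s)).
have EN j : E *m N ^+ j = row_mx (N0 ^+ j) 0 by rewrite rowE_X mul1mx.
have rEN j : \rank (E *m N ^+ j) = \rank (N0 ^+ j) by rewrite EN rank_row_mx0.
have a := mxrank_sum_cap (E *m N ^+ k) (N ^+ k.+1).
have a2 : (\rank (E *m N ^+ k.+1) <= \rank (E *m N ^+ k :&: N ^+ k.+1)%MS)%N.
  apply: mxrankS; rewrite sub_capmx submxMl andbT !EN.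
  have -> : row_mx (N0 ^+ k.+1) (0 : 'M_(r, s)) = N0 *m row_mx (N0 ^+ k) 0.
    by rewrite mul_mx_row mulmx0 exprS mulmxE.
  exact: submxMl.
have b := rank_mul_ge (E + N)%MS (N ^+ k).
have b2 : (\rank ((E + N)%MS *m N ^+ k) = \rank (E *m N ^+ k + N ^+ k.+1)%MS)%N.
  by rewrite (addsmxMr E N (N ^+ k)) exprS mulmxE.
have c : (r + \rank N1 <= \rank (E + N)%MS)%N.
  rewrite -[X in (X + _)%N](mxrank1 F r) -rank_diag_block_mx; apply: mxrankS.
  rewrite block_mxEv col_mx_sub addsmxSl /=.
  have -> : row_mx (0 : 'M_(s, r)) N1 = row_mx 0 1%:M *m N + (- B) *m E.
    rewrite mul_row_block mul_mx_row !mul0mx !add0r !mul1mx mulmx1 mulmx0.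
    by rewrite add_row_mx subrr addr0.
  apply: addmx_sub; first by apply: submx_trans (submxMl _ _) (addsmxSr _ _).
  by apply: submx_trans (submxMl _ _) (addsmxSl _ _).
rewrite !rEN in a a2; lia.
Qed.

Lemma I3 : (\rank N <= \rank N0 + s)%N.
Proof.
rewrite /N block_mxEv; apply: leq_trans (rank_col_le _ _) _.
by rewrite rank_row_mx0 leq_add2l rank_leq_row.
Qed.

Lemma I4 j : (\rank (N0 ^+ j) + \rank (N1 ^+ j) <= \rank (N ^+ j))%N.
Proof. by have [Bj ->] := blockX j; apply: rank_lblock. Qed.

End Ranks.


Section CharPoly.
Variable F : closedFieldType.

Lemma char_poly_conj n (Q A : 'M[F]_n) : Q \in unitmx ->
  char_poly (Q *m A *m invmx Q) = char_poly A.
Proof.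
move=> Qu.
have QQ : map_mx polyC Q *m map_mx polyC (invmx Q) = 1%:M.
  by rewrite -map_mxM mulmxV // map_mx1.
rewrite /char_poly.
have -> : char_poly_mx (Q *m A *m invmx Q) =
    map_mx polyC Q *m char_poly_mx A *m map_mx polyC (invmx Q).
  rewrite /char_poly_mx mulmxBr mulmxBl !map_mxM mul_mx_scalar -scalemxAl QQ scalemx1.
  by [].
by rewrite !det_mulmx mulrAC -det_mulmx QQ det1 mul1r.
Qed.

Lemma char_poly_lblock d e (T : 'M[F]_d) (X : 'M_(e, d)) (R : 'M_e) :
  char_poly (block_mx T 0 X R) = char_poly T * char_poly R.
Proof.
rewrite /char_poly /char_poly_mx map_block_mx map_mx0 (scalar_mx_block d e 'X).
by rewrite opp_block_mx add_block_mx oppr0 addr0 det_lblock.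
Qed.

Lemma char_poly_nil d (T : 'M[F]_d) (b : F) m : (T - b%:M) ^+ m = 0 ->
  char_poly T = ('X - b%:P) ^+ d.
Proof.
move=> Tm.
have [rs Hrs] := closed_field_poly_normal (char_poly T).
rewrite (monicP (char_poly_monic T)) scale1r in Hrs.
have allb : forall z, z \in rs -> z = b.
  move=> z zrs.
  have : eigenvalue T z by rewrite eigenvalue_root_char Hrs root_prod_XsubC.
  move=> /eigenvalueP [v vT vn0].
  have vTj j : v *m (T - b%:M) ^+ j = (z - b) ^+ j *: v.
    elim: j => [|j IH]; first by rewrite !expr0 mulmx1 scale1r.
    rewrite exprSr -mulmxE mulmxA IH -scalemxAl mulmxBr vT mul_mx_scalar.
    by rewrite -scalerBl scalerA -exprSr.
  have := vTj m; rewrite Tm mulmx0 => /esym/eqP; rewrite scaler_eq0 (negPf vn0) orbF.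
  by rewrite expf_eq0 subr_eq0 => /andP[_ /eqP].
have Hp : \prod_(z <- rs) ('X - z%:P) = ('X - b%:P) ^+ size rs.
  elim: rs allb {Hrs} => [|z rs IH] allb; first by rewrite big_nil expr0.
  rewrite big_cons IH => [|y yrs]; last by apply: allb; rewrite inE yrs orbT.
  by rewrite (allb z) ?mem_head // exprS.
rewrite Hrs Hp; congr (_ ^+ _).
have := size_char_poly T; rewrite Hrs Hp size_exp_XsubC.
by case.
Qed.

Lemma exists_basis k m n (K : 'M[F]_(m, n)) : \rank K = k ->
  exists V : 'M[F]_(k, n), row_free V /\ (V :=: K)%MS.
Proof. by move=> <-; exists (row_base K); split; [apply: row_base_free | apply: eq_row_base]. Qed.

Lemma mup_ker_aux d e (A : 'M[F]_(d + e)) (b : F) m :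
  \rank ((A - b%:M) ^+ m) = e -> (d <= mup b (char_poly A))%N.
Proof.
move=> rk.
set K := kermx ((A - b%:M) ^+ m).
have rK : \rank K = d by rewrite mxrank_ker rk addnK.
have rKC : \rank K^C%MS = e by rewrite mxrank_compl rK addKn.
have [V [Vfree VK]] := exists_basis rK.
have [W [Wfree WK]] := exists_basis rKC.
set Q := col_mx V W.
have Qu : Q \in unitmx.
  rewrite -row_full_unit /row_full /Q -addsmxE.
  rewrite (adds_eqmx VK WK).
  by have := addsmx_compl_full K; rewrite /row_full.
have comm : (A - b%:M) ^+ m *m A = A *m (A - b%:M) ^+ m.
  rewrite !mulmxE; apply/esym/commrX.
  rewrite /GRing.comm -!mulmxE mulmxBr mulmxBl scalar_mxC.
  by [].
have VK0 : V *m (A - b%:M) ^+ m = 0.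
  by apply/sub_kermxP; rewrite -/K -VK submx_refl.
have VA : (V *m A <= V)%MS.
  rewrite VK; apply/sub_kermxP; rewrite -mulmxA -comm mulmxA VK0 mul0mx.
  by [].
set T := V *m A *m pinvmx V.
have VAT : V *m A = T *m V by rewrite /T mulmxKpV.
have QQ : Q *m invmx Q = 1%:M by rewrite mulmxV.
have VQ : V *m invmx Q = row_mx 1%:M 0.
  move: QQ; rewrite /Q mul_col_mx (scalar_mx_block d e 1) block_mxEv.
  by move=> /eq_col_mx [].
have blk : Q *m A *m invmx Q =
    block_mx T 0 (lsubmx (W *m A *m invmx Q)) (rsubmx (W *m A *m invmx Q)).
  rewrite block_mxEv hsubmxK /Q mul_col_mx mul_col_mx VAT -mulmxA VQ.
  by rewrite mul_mx_row mulmx1 mulmx0.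
have Tm : (T - b%:M) ^+ m = 0.
  have Tj j : (T - b%:M) ^+ j *m V = V *m (A - b%:M) ^+ j.
    elim: j => [|j IH]; first by rewrite !expr0 mul1mx mulmx1.
    rewrite exprSr -mulmxE -mulmxA mulmxBl -VAT -scalar_mxC -mulmxBr mulmxA IH.
    by rewrite -mulmxA mulmxE -exprSr.
  by apply/eqP; rewrite -(mulmx_free_eq0 _ Vfree) Tj VK0.
rewrite -(char_poly_conj A Qu) blk char_poly_lblock (char_poly_nil Tm).
rewrite mup_geq ?dvdp_mulr //.
by rewrite mulf_neq0 ?expf_neq0 ?polyXsubC_eq0 ?monic_neq0 ?char_poly_monic.
Qed.

Lemma char_poly_cast n n' (E : n = n') (A : 'M[F]_n) :
  char_poly (castmx (E, E) A) = char_poly A.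
Proof. by case: n' / E; rewrite castmx_id. Qed.

Lemma mup_ker n (A : 'M[F]_n) b m :
  (n - \rank ((A - b%:M) ^+ m) <= mup b (char_poly A))%N.
Proof.
have he : (\rank ((A - b%:M) ^+ m) <= n)%N by apply: rank_leq_row.
have E : n = (n - \rank ((A - b%:M) ^+ m) + \rank ((A - b%:M) ^+ m))%N by rewrite subnK.
have := @mup_ker_aux _ _ (castmx (E, E) A) b m.
by rewrite rank_castX char_poly_cast; apply.
Qed.

End CharPoly.


Section Hform.
Variables (C : numClosedFieldType) (n : nat) (G : 'M[C]_n).

Lemma hformDl u1 u2 v : hform G (u1 + u2) v = hform G u1 v + hform G u2 v.
Proof. by rewrite /hform !mulmxDl mxE. Qed.

Lemma hformZl a u v : hform G (a *: u) v = a * hform G u v.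
Proof. by rewrite /hform -!scalemxAl mxE. Qed.

Lemma hformDr u v1 v2 : hform G u (v1 + v2) = hform G u v1 + hform G u v2.
Proof. by rewrite /hform map_mxD linearD /= mulmxDr mxE. Qed.

Lemma hformZr a u v : hform G u (a *: v) = a^* * hform G u v.
Proof. by rewrite /hform map_mxZ linearZ /= -scalemxAr mxE. Qed.

Lemma tr00 (M : 'M[C]_1) : M^T 0 0 = M 0 0.
Proof. by rewrite mxE. Qed.

Lemma conj00 (M : 'M[C]_1) : (M 0 0)^* = (map_mx Num.conj M) 0 0.
Proof. by rewrite mxE. Qed.

Lemma conj_conj_mx p q (M : 'M[C]_(p, q)) : map_mx Num.conj (map_mx Num.conj M) = M.
Proof. by apply/matrixP => i j; rewrite !mxE conjCK. Qed.

Lemma hform_sym u v : hermitian_mx G -> hform G v u = (hform G u v)^*.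
Proof.
move=> hG; rewrite /hform -[LHS]tr00 conj00.
rewrite !trmx_mul trmxK !map_mxM map_trmx conj_conj_mx.
have -> : G^T = map_mx Num.conj G by rewrite {1}hG trmxK.
by rewrite mulmxA.
Qed.

Lemma hform_rad v w : hermitian_mx G -> psd_form G ->
  hform G v v = 0 -> hform G v w = 0.
Proof.
move=> hG hpsd hv; set a := hform G v w; set c := hform G w w.
have c0 : 0 <= c := hpsd w.
have c1 : 0 < c + 1 by rewrite ltr_wpDl // ltr01.
set x := (c + 1)^-1.
have x0 : 0 < x by rewrite invr_gt0.
have xr : x^* = x by apply: conj_Creal; apply: gtr0_real.
have := hpsd (v + (- (x * a)) *: w).
rewrite hformDl !hformDr !hformZl !hformZr hv (hform_sym v w hG) -/a -/c.
rewrite rmorphN rmorphM /= xr.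
have -> : 0 + (- (x * a^*) * a) + (- (x * a) * a^* + - (x * a) * (- (x * a^*) * c))
    = (a * a^*) * (x * (x * c - 2)) by ring.
have xc : x * c < 1.
  by rewrite mulrC ltr_pdivrMr // mul1r ltrDl ltr01.
have neg : x * (x * c - 2) < 0.
  rewrite pmulr_rlt0 // subr_lt0; apply: lt_trans xc _.
  by rewrite ltr1n.
move=> h; have q0 := mul_conjC_ge0 a.
move: q0; rewrite le_eqVlt => /orP[/eqP/esym/eqP|q0].
  by rewrite mul_conjC_eq0 => /eqP.
have hn : a * a^* * (x * (x * c - 2)) < 0 by rewrite pmulr_rlt0.
by have := le_lt_trans h hn; rewrite ltxx.
Qed.

End Hform.


Section LemL.
Variables (C : numClosedFieldType) (n m0 : nat) (G A : 'M[C]_n) (Y : 'M[C]_(m0, n)).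
Hypotheses (hG : hermitian_mx G) (hpsd : psd_form G) (hind : indecomposable_op G A)
  (hY : forall u, (hform G u u == 0) = (u <= Y)%MS)
  (hnz : exists u, hform G u u != 0) (hstab : (Y *m A <= Y)%MS).

Lemma Lmain b (y : 'rV[C]_n) k : (y <= Y)%MS -> y *m (A - b%:M) ^+ k.+1 = 0 ->
  (y *m (A - b%:M) ^+ k <= (A - b%:M) ^+ k.+1)%MS.
Proof.
move=> yY yk; set N := A - b%:M in yk *.
apply/negPn/negP => hw.
set w := y *m N ^+ k in hw.
have [K0 hK0 hwK0] : exists2 K0 : 'M[C]_n, N ^+ k.+1 *m K0 = 0 & w *m K0 != 0.
  by exists (cokermx (N ^+ k.+1)); [apply: mulmx_coker | rewrite -submxE].
move: hwK0 => /matrix0Pn [i0 [j0 hj0]].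
rewrite [i0]ord1 in hj0.
set c := ((w *m K0) 0 j0)^-1 *: col j0 K0.
have Nc : N ^+ k.+1 *m c = 0.
  by rewrite /c -scalemxAr colE mulmxA hK0 mul0mx scaler0.
have wc : (w *m c) 0 0 = 1.
  by rewrite /c -scalemxAr mxE colE mulmxA -colE [(col _ _) 0 0]mxE mulVf.
pose Vk := \matrix_(i < k.+1) (y *m N ^+ i).
pose K := \matrix_(a < n, j < k.+1) ((N ^+ j *m c) a 0).
have vK (v : 'rV[C]_n) (j : 'I_k.+1) : (v *m K) 0 j = (v *m N ^+ j *m c) 0 0.
  rewrite -mulmxA [LHS]mxE [RHS]mxE; apply: eq_bigr => a _; by rewrite mxE.
have yNz i : (k.+1 <= i)%N -> y *m N ^+ i = 0.
  by move=> h; rewrite -(subnKC h) exprD -mulmxE mulmxA yk mul0mx.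
have Tij (i j : 'I_k.+1) : (Vk *m K) i j = (y *m N ^+ (i + j) *m c) 0 0.
  have -> : (Vk *m K) i j = (row i (Vk *m K)) 0 j by rewrite [RHS]mxE.
  by rewrite row_mul rowK vK exprD -mulmxE mulmxA.
have Tinj (a : 'rV[C]_k.+1) : a *m (Vk *m K) = 0 -> a = 0.
  move=> ha.
  have key : forall t (l : 'I_k.+1), val l = t -> a 0 l = 0.
    elim/ltn_ind => t IH l hl.
    have hlk := ltn_ord l.
    have hj : (k - t < k.+1)%N by rewrite ltnS leq_subr.
    pose j := Ordinal hj.
    have := congr1 (fun M : 'M[C]_(1, k.+1) => M 0 j) ha; rewrite mxE (bigD1 l) //= big1.
      rewrite Tij /= hl subnKC -?hl -/w ?wc ?mulr1 ?addr0 ?mxE //.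
    move=> l' hl'; case: (ltnP l' t) => h.
      by rewrite (IH l') ?mul0r.
    rewrite Tij yNz ?mul0mx ?mxE ?mulr0 //=.
    have : (l' : nat) != t by rewrite -hl val_eqE.
    have htk : (t <= k)%N by rewrite -hl -ltnS.
    lia.
  by apply/rowP => l; rewrite mxE; apply: (key l).
have rT : \rank (Vk *m K) = k.+1.
  have kz : kermx (Vk *m K) == 0.
    by apply/rowV0P => v /sub_kermxP /Tinj.
  have := mxrank_ker (Vk *m K); rewrite (eqP kz) mxrank0.
  have := rank_leq_row (Vk *m K); lia.
have rV : \rank Vk = k.+1.
  by apply/eqP; rewrite eqn_leq rank_leq_row /= -{1}rT mxrankM_maxl.
have rK : \rank K = k.+1.
  by apply/eqP; rewrite eqn_leq rank_leq_col /= -{1}rT mxrankM_maxr.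
have kn : (k.+1 <= n)%N by rewrite -rK rank_leq_row.
set W := kermx K.
have rW : \rank W = (n - k.+1)%N by rewrite mxrank_ker rK.
have cap0 : (Vk :&: W)%MS = 0.
  apply/eqP/rowV0P => v; rewrite sub_capmx => /andP[/submxP[a ->] /sub_kermxP haK].
  by rewrite (Tinj a) ?mul0mx // mulmxA.
have full : \rank (Vk + W)%MS = n.
  have := mxrank_sum_cap Vk W; rewrite cap0 mxrank0 rV rW; lia.
have YN : (Y *m N <= Y)%MS.
  rewrite /N mulmxBr mul_mx_scalar -scaleNr; apply: addmx_sub => //.
  exact: scalemx_sub.
have yNi i : (y *m N ^+ i <= Y)%MS.
  elim: i => [|i IH]; first by rewrite expr0 mulmx1.
  by rewrite exprSr -mulmxE mulmxA; apply: submx_trans (submxMr _ IH) YN.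
have VkY : (Vk <= Y)%MS by apply/row_subP => i; rewrite rowK.
have AN : A = N + b%:M by rewrite /N subrK.
apply: hind; exists <<Vk>>%MS, W; split.
- by rewrite -mxrank_eq0 genmxE rV.
- apply/negP => /eqP W0.
  have : \rank Vk = n by move: full; rewrite W0 addsmx0.
  move=> rVn; have [u hu] := hnz; move: hu; rewrite hY; apply/negP/negPn.
  apply: submx_trans VkY; apply: submx_trans (submx1 u) _.
  by rewrite sub1mx /row_full rVn.
- apply/andP; split.
    apply/andP; split; first exact: submx1.
    by rewrite sub1mx /row_full (adds_eqmx (genmxE Vk) (eqmx_refl W)) full.
  apply/mxdirect_addsP; apply/eqP; rewrite -mxrank_eq0.
  by rewrite (cap_eqmx (genmxE Vk) (eqmx_refl W)) cap0 mxrank0.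
- apply/andP; split.
    rewrite (eqmxMr A (genmxE Vk)) genmxE.
    rewrite AN mulmxDr mul_mx_scalar; apply: addmx_sub; last exact: scalemx_sub.
    apply/row_subP => i; rewrite row_mul rowK -mulmxA mulmxE -exprSr.
    case: (ltnP i.+1 k.+1) => h.
      by have := row_sub (Ordinal h) Vk; rewrite rowK.
    by rewrite yNz // sub0mx.
  rewrite AN mulmxDr mul_mx_scalar; apply: addmx_sub; last exact: scalemx_sub.
  apply/row_subP => i; rewrite row_mul; apply/sub_kermxP.
  set v := row i W.
  have vW : v *m K = 0 by apply/sub_kermxP; rewrite row_sub.
  apply/rowP => j; rewrite vK -(mulmxA v N) mulmxE -exprS [RHS]mxE.
  case: (ltnP j.+1 k.+1) => h.
    by have := congr1 (fun M : 'M[C]_(1, k.+1) => M 0 (Ordinal h)) vW; rewrite vK [RHS]mxE.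
  have -> : j.+1 = k.+1 by have := ltn_ord j; lia.
  by rewrite -mulmxA Nc mulmx0 mxE.
- move=> v w' hv hw'; apply: hform_rad => //; apply/eqP; rewrite hY.
  by rewrite genmxE in hv; apply: submx_trans hv VkY.
Qed.

End LemL.


Unset Implicit Arguments. Set Strict Implicit.

Theorem theorem2p2 (C : numClosedFieldType) (r s : nat)
    (G A P : 'M[C]_(r + s)) (lam : C) :
  hermitian_mx G ->
  psd_form G ->
  bounded_op G A ->
  indecomposable_op G A ->
  (* U_0 <> 0 and U_0 <> U *)
  (exists u : 'rV[C]_(r + s), u != 0 /\ hform G u u = 0) ->
  (exists u : 'rV[C]_(r + s), hform G u u != 0) ->
  (* P is a basis of U whose first r rows form a basis of U_0 *)
  P \in unitmx ->
  (forall u : 'rV[C]_(r + s), (hform G u u == 0) = (u <= usubmx P)%MS) ->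
  eigenvalue (restr_op P A) lam ->
  [/\ eigenvalue (quot_op P A) lam,
      (forall (m0 : nat) (sz0 : 'I_m0 -> nat) (ev0 : 'I_m0 -> C), is_jordan_form (restr_op P A) sz0 ev0 ->
         (n_blocks ev0 lam <= alg_mult (quot_op P A) lam)%N)
    & (forall k : nat, (1 <= k)%N ->
       forall (m0 m1 : nat) (sz0 : 'I_m0 -> nat) (ev0 : 'I_m0 -> C) (sz1 : 'I_m1 -> nat) (ev1 : 'I_m1 -> C),
         is_jordan_form (restr_op P A) sz0 ev0 ->
         is_jordan_form (quot_op P A) sz1 ev1 ->
         (n_blocks_of_size sz0 ev0 lam k <= n_blocks ev1 lam)%N)].
Proof.
move=> hG hpsd hbd hind _ hnz Pu hP hev.
set Y := usubmx P.
have hstab : (Y *m A <= Y)%MS.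
  apply/row_subP => i; rewrite row_mul -hP.
  have h0 : hform G (row i Y) (row i Y) = 0 by apply/eqP; rewrite hP row_sub.
  have [c [_ [_ hc]]] := hbd.
  have := hc (row i Y); rewrite /semi_norm h0 sqrtC0 mulr0 => hle.
  have hge : 0 <= sqrtC (hform G (row i Y *m A) (row i Y *m A)) by rewrite sqrtC_ge0.
  have : sqrtC (hform G (row i Y *m A) (row i Y *m A)) == 0.
    by rewrite eq_le hle hge.
  by rewrite sqrtC_eq0.
set M := P *m A *m invmx P.
set A0 := restr_op P A; set A1 := quot_op P A.
have hur : ursubmx M = 0.
  have YA : Y *m A = (Y *m A *m pinvmx Y) *m Y by rewrite mulmxKpV.
  have YP : Y *m invmx P = row_mx 1%:M 0.
    have : P *m invmx P = 1%:M by rewrite mulmxV.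
    move=> /(congr1 usubmx); rewrite -mul_usub_mx -/Y.
    by rewrite (scalar_mx_block r s 1) block_mxEv col_mxKu.
  have : usubmx M = row_mx (Y *m A *m pinvmx Y) 0.
    by rewrite /M -!mul_usub_mx -/Y {1}YA -mulmxA YP mul_mx_row mulmx1 mulmx0.
  by rewrite /ursubmx => ->; rewrite row_mxKr.
set B := dlsubmx M.
have hM : M = block_mx A0 0 B A1 by rewrite -hur submxK.
set N0 := A0 - lam%:M; set N1 := A1 - lam%:M.
set NA := A - lam%:M.
have hN : block_mx N0 0 B N1 = P *m NA *m invmx P.
  rewrite /N0 /N1 /NA mulmxBr mulmxBl mul_mx_scalar -scalemxAl mulmxV //.
  rewrite scalemx1 -/M hM (scalar_mx_block r s lam) opp_block_mx add_block_mx.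
  by rewrite !subr0.
have hNX j : (block_mx N0 0 B N1) ^+ j = P *m NA ^+ j *m invmx P.
  by rewrite hN conjX'.
have H : forall (x : 'rV[C]_r) k, row_mx x 0 *m (block_mx N0 0 B N1) ^+ k.+1 = 0 ->
                 (row_mx x 0 *m (block_mx N0 0 B N1) ^+ k <= (block_mx N0 0 B N1) ^+ k.+1)%MS.
  move=> x k; rewrite !hNX.
  set y := row_mx x 0 *m P.
  have yY : (y <= Y)%MS.
    by rewrite /y -[P]vsubmxK mul_row_col mul0mx addr0 submxMl.
  move=> hk.
  have yk : y *m NA ^+ k.+1 = 0.
    have -> : y *m NA ^+ k.+1 = (row_mx x 0 *m (P *m NA ^+ k.+1 *m invmx P)) *m P.
      by rewrite /y !mulmxA mulmxKV.
    by rewrite hk mul0mx.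
  have := Lmain hG hpsd hind hP hnz hstab yY yk.
  rewrite -/NA => hsub.
  rewrite !mulmxA -/y; apply: submx_trans (submxMr (invmx P) hsub) _.
  have -> : NA ^+ k.+1 *m invmx P = invmx P *m (P *m NA ^+ k.+1 *m invmx P).
    by rewrite !mulmxA mulVmx // mul1mx.
  exact: submxMl.
set NN := block_mx N0 0 B N1 in H hNX.
have HI1 k : (\rank (N0 ^+ k) + \rank (NN ^+ k.+2) <= \rank (N0 ^+ k.+1) + \rank (NN ^+ k.+1))%N
  := I1 H k.
have HI2 k : (\rank (NN ^+ k) + \rank (N0 ^+ k.+1) + \rank N1
     <= \rank (N0 ^+ k) + \rank (NN ^+ k.+1) + s)%N := I2 N0 B N1 k.
have HI3 : (\rank NN <= \rank N0 + s)%N := I3 N0 B N1.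
have HI4 j : (\rank (N0 ^+ j) + \rank (N1 ^+ j) <= \rank (NN ^+ j))%N := I4 N0 B N1 j.
have tele J : (r + \rank (NN ^+ J.+1) <= \rank (NN ^+ 1) + \rank (N0 ^+ J))%N.
  elim: J => [|J IH]; first by rewrite expr0 mxrank1 addnC.
  have := HI1 J; lia.
have dec j : (\rank (N0 ^+ j.+1) <= \rank (N0 ^+ j))%N.
  by rewrite exprSr -mulmxE mxrankM_maxl.
have [J hJ] : exists J, \rank (N0 ^+ J) = \rank (N0 ^+ J.+1).
  case: (boolP [exists J : 'I_r.+1, \rank (N0 ^+ J) == \rank (N0 ^+ J.+1)]).
    by move=> /existsP [J /eqP hJ]; exists J.
  rewrite negb_exists => /forallP hne.
  have bnd : forall j, (j <= r.+1)%N -> (\rank (N0 ^+ j) + j <= r)%N.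
    elim => [|j IH] hj; first by rewrite expr0 mxrank1 addn0.
    have jr : (j < r.+1)%N by [].
    have := hne (Ordinal jr); rewrite /= => hneq.
    have := dec j; have := IH (ltnW hj).
    move: hneq => /eqP hneq; lia.
  by have := bnd r.+1 (leqnn _); lia.
have star : (r + \rank (N1 ^+ J.+1) <= \rank N0 + s)%N.
  have := tele J; have := HI4 J.+1; rewrite expr1; lia.
have r0 : (\rank N0 < r)%N.
  move: hev; rewrite /eigenvalue /eigenspace -/A0 -/N0 -mxrank_eq0 mxrank_ker.
  have := rank_leq_row N0; lia.
split.
- rewrite /eigenvalue /eigenspace -/A1 -/N1 -mxrank_eq0 mxrank_ker.
  suff h : (\rank N1 < s)%N by rewrite subn_eq0 -ltnNge.
  rewrite ltnNge; apply/negP => hs.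
  have rf : row_free N1 by rewrite /row_free eqn_leq rank_leq_row.
  have pw j : \rank (N1 ^+ j) = s.
    elim: j => [|j IH]; first by rewrite expr0 mxrank1.
    by rewrite exprSr -mulmxE mxrankMfree.
  have := pw J.+1; lia.
- move=> m0 sz0 ev0 hJ0.
  have hb : (\rank N0 + n_blocks ev0 lam)%N = r := jordan_nblocks lam hJ0.
  have hm : (s - \rank (N1 ^+ J.+1) <= alg_mult A1 lam)%N := mup_ker A1 lam J.+1.
  lia.
- move=> [//|k] _ m0 m1 sz0 ev0 sz1 ev1 hJ0 hJ1.
  have hb0 : (\rank (N0 ^+ k) + \rank (N0 ^+ k.+2)
     = \rank (N0 ^+ k.+1) + \rank (N0 ^+ k.+1) + n_blocks_of_size sz0 ev0 lam k.+1)%N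
     := jordan_nblocks_size lam k hJ0.
  have hb1 : (\rank N1 + n_blocks ev1 lam)%N = s := jordan_nblocks lam hJ1.
  have := HI1 k; have := HI2 k.+1; lia.
Qed.
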